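(* Let $\alpha>0$ be an ordinal and let $\mathcal{X}\in\mathfrak{C}_\alpha$. Then there is a countable collection $\{\mathcal{Y}_m\}_{m=1}^\infty$ of families of metric spaces such that for every $R\in\mathbb{R}^{\mathbb{N}}$ there is an $n$ with $\mathcal{X}\xrightarrow{R}\mathcal{Y}_n$ and $\mathcal{Y}_n\in\mathfrak{C}_\beta$ for some $\beta<\alpha$.
   Context: A family $\mathcal{U}$ of metric subspaces of a metric space $(X,d)$ is $r$-disjoint if $d(x,y)>r$ whenever $x\in U$, $y\in U'$, $U\neq U'$ in $\mathcal{U}$. For families $\mathcal{X},\mathcal{Y}$ and $R\in\mathbb{R}^{\mathbb{N}}$, $\mathcal{X}\xrightarrow{R}\mathcal{Y}$ means: there is an integer $k$ such that for each $X\in\mathcal{X}$ there are subcollections $\mathcal{U}_1,\dots,\mathcal{U}_k\subseteq\mathcal{Y}$ of subspaces of $X$, each $\mathcal{U}_i$ being $R_i$-disjoint, with $\bigcup_i\mathcal{U}_i$ covering $X$. A family is bounded if the diameters of its members are uniformly bounded. $\mathfrak{C}_0$ is the class of bounded families; for an ordinal $\alpha>0$, $\mathfrak{C}_\alpha$ is the class of families $\mathcal{X}$ such that for every $R\in\mathbb{R}^{\mathbb{N}}$ there exist $\beta<\alpha$ and $\mathcal{Y}\in\mathfrak{C}_\beta$ with $\mathcal{X}\xrightarrow{R}\mathcal{Y}$. *)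

(* Defs.v *)
From Stdlib Require Import Reals.
Open Scope R_scope.

Definition is_metric {M : Type} (d : M -> M -> R) : Prop :=
  (forall x y, 0 <= d x y) /\
  (forall x y, d x y = 0 <-> x = y) /\
  (forall x y, d x y = d y x) /\
  (forall x y z, d x z <= d x y + d y z).

(* Metric subspaces of (M,d) are subsets of M with the induced metric;
   a family is a collection of such subspaces. *)
Definition msubspace (M : Type) := M -> Prop.
Definition mfamily (M : Type) := msubspace M -> Prop.

Definition r_disjoint {M : Type} (d : M -> M -> R) (r : R) (U : mfamily M) : Prop :=
  forall A B : msubspace M, U A -> U B -> A <> B ->
  forall x y, A x -> B y -> d x y > r.

Definition bounded_family {M : Type} (d : M -> M -> R) (F : mfamily M) : Prop :=
  exists D : R, forall A, F A -> forall x y, A x -> A y -> d x y <= D.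

(* X --R--> Y, with R : nat -> R (indices i = 1..k used). *)
Definition decomposes {M : Type} (d : M -> M -> R)
    (X : mfamily M) (Rs : nat -> R) (Y : mfamily M) : Prop :=
  exists k : nat, forall A, X A ->
    exists U : nat -> mfamily M,
      (forall i, (1 <= i <= k)%nat ->
         (forall B, U i B -> Y B /\ (forall x, B x -> A x)) /\
         r_disjoint d (Rs i) (U i)) /\
      (forall x, A x -> exists i, (1 <= i <= k)%nat /\ exists B, U i B /\ B x).

(* Ordinals are modelled by elements of an arbitrary well-ordered type (O, lt). *)
Inductive Cls {M : Type} (d : M -> M -> R) {O : Type} (lt : O -> O -> Prop)
  : O -> mfamily M -> Prop :=
| C_zero : forall a F, (forall b, ~ lt b a) -> bounded_family d F -> Cls d lt a F
| C_succ : forall a F, (exists b, lt b a) ->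
    (forall Rs : nat -> R, exists b Y, lt b a /\ Cls d lt b Y /\ decomposes d F Rs Y) ->
    Cls d lt a F.

Definition well_order {O : Type} (lt : O -> O -> Prop) : Prop :=
  well_founded lt /\
  (forall a b c, lt a b -> lt b c -> lt a c) /\
  (forall a b, lt a b \/ a = b \/ lt b a).

(* Main.v *)
Require Import Defs.
From Stdlib Require Import Reals.
From Stdlib Require Import Lra Lia ZArith List Classical ClassicalEpsilon.
From mathcomp Require choice.
Open Scope R_scope.

Lemma nat_above (r : R) : exists n : nat, r <= INR n.
Proof.
  destruct (archimed r) as [H _].
  exists (Z.abs_nat (up r)).
  rewrite INR_IZR_INZ, Nat2Z.inj_abs_nat.
  assert (IZR (up r) <= IZR (Z.abs (up r))) by (apply IZR_le; lia).
  lra.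
Qed.

Definition Pn {M : Type} (d : M -> M -> R) {O : Type} (lt : O -> O -> Prop)
  (alpha : O) (X : mfamily M) (n : nat) (Y : mfamily M) : Prop :=
  let s := choice.CodeSeq.decode n in
  exists beta, lt beta alpha /\ Cls d lt beta Y /\
  forall A, X A ->
    exists U : nat -> mfamily M,
      (forall i, (1 <= i <= length s)%nat ->
         (forall B, U i B -> Y B /\ (forall x, B x -> A x)) /\
         r_disjoint d (INR (nth (i-1) s 0%nat)) (U i)) /\
      (forall x, A x -> exists i, (1 <= i <= length s)%nat /\ exists B, U i B /\ B x).

Theorem lemma3p6 (M : Type) (d : M -> M -> R) (hd : is_metric d)
  (O : Type) (lt : O -> O -> Prop) (hwo : well_order lt)
  (alpha : O) (halpha : exists b, lt b alpha)
  (X : mfamily M) (hX : Cls d lt alpha X) :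
  exists Ys : nat -> mfamily M,
    forall Rs : nat -> R, exists n : nat,
      decomposes d X Rs (Ys n) /\
      exists beta, lt beta alpha /\ Cls d lt beta (Ys n).
Proof.
  assert (HY : forall n, exists Y, (exists Y', Pn d lt alpha X n Y') -> Pn d lt alpha X n Y).
  { intro n. destruct (classic (exists Y', Pn d lt alpha X n Y')) as [[Y' HY']|HN].
    - exists Y'; auto.
    - exists (fun _ => False). intro H; contradiction. }
  exists (fun n => proj1_sig (constructive_indefinite_description _ (HY n))).
  intro Rs.
  assert (Hf : forall i, exists m, Rs i <= INR m) by (intro; apply nat_above).
  set (f := fun i => proj1_sig (constructive_indefinite_description _ (Hf i))).
  assert (Hfi : forall i, Rs i <= INR (f i))
    by (intro i; exact (proj2_sig (constructive_indefinite_description _ (Hf i)))).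
  assert (Hsucc : forall Rs : nat -> R, exists b Y, lt b alpha /\ Cls d lt b Y /\ decomposes d X Rs Y).
  { inversion hX; subst.
    - destruct halpha as [b Hb]. exfalso; eapply H; eauto.
    - assumption. }
  destruct (Hsucc (fun i => INR (f i))) as [b [Y [Hb [HbY [k Hk]]]]].
  set (s := map f (List.seq 1 k)).
  assert (Hlen : length s = k) by (unfold s; rewrite length_map, length_seq; reflexivity).
  assert (Hnth : forall i, (1 <= i <= k)%nat -> nth (i-1) s 0%nat = f i).
  { intros i Hi. unfold s. rewrite nth_indep with (d' := f 0%nat)
      by (rewrite length_map, length_seq; lia).
    rewrite map_nth, seq_nth by lia. f_equal; lia. }
  exists (choice.CodeSeq.code s).
  assert (HP : Pn d lt alpha X (choice.CodeSeq.code s) Y).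
  { unfold Pn. rewrite choice.CodeSeq.codeK. exists b. split; [exact Hb|split; [exact HbY|]].
    intros A HA. destruct (Hk A HA) as [U [HU1 HU2]]. exists U. rewrite Hlen. split.
    - intros i Hi. rewrite Hnth by exact Hi. apply HU1; exact Hi.
    - exact HU2. }
  pose proof (proj2_sig (constructive_indefinite_description _ (HY (choice.CodeSeq.code s)))) as HQ.
  simpl in HQ. specialize (HQ (ex_intro _ Y HP)).
  set (Yn := proj1_sig _) in *.
  unfold Pn in HQ. rewrite choice.CodeSeq.codeK in HQ.
  destruct HQ as [beta [Hbeta [HC HD]]].
  split; [|exists beta; auto].
  exists k. intros A HA. destruct (HD A HA) as [U [HU1 HU2]]. exists U. rewrite Hlen in HU1, HU2.
  split; [|exact HU2].
  intros i Hi. destruct (HU1 i Hi) as [H1 H2]. split; [exact H1|].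
  rewrite Hnth in H2 by exact Hi.
  intros B1 B2 h1 h2 hne x y hx hy. specialize (H2 B1 B2 h1 h2 hne x y hx hy).
  specialize (Hfi i). lra.
Qed.
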